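(* Let $G=(V,E)$ be a graph with no isolated vertices and $m\ge1$ edges, and let $d$ be an optimal solution of $\mathrm{IP}_{\mathrm{sparse}}$. Let $G_d=(V,E_d)$ be the graph with an edge $\{i,j\}$ for every pair $i\neq j$ with $d_{i,j}=0$. Then every connected component $C$ of $G_d$ induces a connected subgraph $G[C]$ of $G$.
   Context: $G=(V,E)$ is an undirected simple graph, $V=\{1,\dots,n\}$, $m=|E|$, adjacency matrix $A$, degrees $d_i$, modularity matrix $B_{i,j}=A_{i,j}-\frac{d_id_j}{2m}$. Variables $d_{i,j}$ satisfy $d_{i,j}=d_{j,i}$, $d_{i,i}=0$. $N(i)$ is the neighbor set of $i$ and $N(i,j)=(N(i)\cup N(j))\setminus\{i,j\}$. $\mathrm{IP}_{\mathrm{sparse}}$: maximize $-\frac{1}{2m}\sum_{i,j}B_{i,j}d_{i,j}$ subject to $d_{i,k}+d_{k,j}\ge d_{i,j}$ for every pair $i\ne j$ and every $k\in N(i,j)$, and $d_{i,j}\in\{0,1\}$ for all $i\ne j$. *)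

(* Defs.v *)
From HB Require Import structures.
From mathcomp Require Import all_boot all_order all_algebra.
Set Implicit Arguments. Unset Strict Implicit. Unset Printing Implicit Defensive.
Import Order.TTheory GRing.Theory Num.Theory.

Section Defs.
Variable T : finType.
Variable e : rel T.

Definition simple_graph : Prop := symmetric e /\ irreflexive e.

Definition deg (i : T) : nat := #|[set j | e i j]|.
Definition twom : nat := \sum_(i : T) deg i.
Definition num_edges : nat := twom %/ 2.

Definition no_isolated : Prop := forall i : T, exists j, e i j.

Definition modB (i j : T) : rat :=
  ((e i j : nat)%:R - ((deg i * deg j)%:R / (twom%:R)))%R.

Definition Nij (i j k : T) : bool := [&& (e i k || e j k), k != i & k != j].

Definition dval (d : T -> T -> bool) (i j : T) : rat := ((d i j : nat)%:R)%R.

Definition feasible_sparse (d : T -> T -> bool) : Prop :=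
  (forall i j, d i j = d j i) /\ (forall i, d i i = false) /\
  (forall i j k, i != j -> Nij i j k ->
     (dval d i k + dval d k j >= dval d i j)%R).

Definition obj_sparse (d : T -> T -> bool) : rat :=
  (- (1 / (twom%:R)) * \sum_(i : T) \sum_(j : T) modB i j * dval d i j)%R.

Definition optimal_sparse (d : T -> T -> bool) : Prop :=
  feasible_sparse d /\
  forall d', feasible_sparse d' -> (obj_sparse d' <= obj_sparse d)%R.

End Defs.

Definition Gd (T : finType) (d : T -> T -> bool) : rel T :=
  [rel i j | (i != j) && ~~ d i j].

Definition component (T : finType) (r : rel T) (x : T) : {set T} :=
  [set y | connect r x y].

Definition induced_connected (T : finType) (e : rel T) (C : {set T}) : Prop :=
  forall x y, x \in C -> y \in C ->
    connect [rel u v | [&& e u v, u \in C & v \in C]] x y.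

(* Main.v *)
Require Import Defs.
From HB Require Import structures.
From mathcomp Require Import all_boot all_order all_algebra.
From mathcomp Require Import zify.
Import Order.TTheory GRing.Theory Num.Theory.

Lemma tri_bool (a b c : bool) :
  (((a : nat)%:R <= (b : nat)%:R + (c : nat)%:R :> rat)%R) = (a ==> b || c).
Proof. by case: a; case: b; case: c. Qed.

Lemma cross (T : finType) (r : rel T) (P : pred T) x y :
  connect r x y -> P x -> ~~ P y -> exists u v, [/\ P u, ~~ P v & r u v].
Proof.
move=> /connectP [p]; elim: p x => [|z p IH] x /=.
  by move=> _ -> ->.
move=> /andP [rxz pz] ly Px Py.
case Pz: (P z); first exact: IH pz ly Pz Py.
by exists x, z; rewrite Px Pz rxz.
Qed.

Theorem mainTheorem2 (T : finType) (e : rel T) (d : T -> T -> bool) :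
  simple_graph e -> no_isolated e -> (1 <= num_edges e)%N ->
  optimal_sparse e d ->
  forall C : {set T}, (exists x, C = component (Gd d) x) ->
    induced_connected e C.
Proof.
move=> [esym eirr] noiso m1 [[dsym [drefl dtri]] dopt] C [x0 ->] x y Cx Cy.
set C0 := component (Gd d) x0 in Cx Cy *.
set eC := [rel u v | [&& e u v, u \in C0 & v \in C0]].
apply/negPn/negP => nxy.
have Gsym : symmetric (Gd d).
  by move=> i j; rewrite /Gd /= eq_sym dsym.
have inC i : (i \in C0) = connect (Gd d) x0 i by rewrite inE.
have stepC i k : i \in C0 -> i != k -> ~~ d i k -> k \in C0.
  move=> Ci ik dik; rewrite inC; apply: (connect_trans (y := i)).
    by rewrite -inC.
  by apply: connect1; rewrite /Gd /= ik dik.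
set A := [set z in C0 | connect eC x z].
have inA z : (z \in A) = (z \in C0) && connect eC x z by rewrite /A inE.
have AC z : z \in A -> z \in C0 by rewrite inA => /andP [].
have Ax : x \in A by rewrite inA Cx connect0.
have nAy : y \notin A by rewrite inA Cy.
have Aclos i k : i \in A -> e i k -> k \in C0 -> k \in A.
  rewrite !inA => /andP [Ci ci] eik Ck; rewrite Ck.
  by apply: connect_trans ci (connect1 _); rewrite /= eik Ci Ck.
have cxy : connect (Gd d) x y.
  apply: connect_trans (_ : connect (Gd d) x0 y); last by rewrite -inC.
  by rewrite (sym_connect_sym Gsym) -inC.
have [u [v [Au nAv Guv]]] := cross _ _ _ _ _ cxy Ax nAy.
have Cu := AC _ Au.
have Cv : v \in C0 by move: Guv => /= /andP [uv duv]; exact: stepC uv duv.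
pose cut i j := [&& i \in A, j \in C0 & j \notin A].
pose d' i j := [|| d i j, cut i j | cut j i].
have d'sym i j : d' i j = d' j i by rewrite /d' dsym orbCA orbC orbA.
have cut_ne i j : cut i j -> ~~ e i j.
  move=> /and3P [Ai Cj nAj]; apply/negP => eij.
  by rewrite (Aclos _ _ Ai eij Cj) in nAj.
have key i j k : cut i j -> Nij e i j k -> d' i k || d' k j.
  move=> cij /and3P [eijk ki kj].
  move: (cij) => /and3P [Ai Cj nAj].
  apply/negPn/negP; rewrite negb_or => /andP [nik nkj].
  have dik : ~~ d i k by move: nik; rewrite /d' negb_or => /andP [].
  have dkj : ~~ d k j by move: nkj; rewrite /d' negb_or => /andP [].
  have Ck : k \in C0 by apply: (stepC i k (AC _ Ai) _ dik); rewrite eq_sym.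
  case/orP: eijk => [eik | ejk].
    have Ak := Aclos _ _ Ai eik Ck.
    by move: nkj; rewrite /d' /cut Ak Cj nAj !orbT.
  have nAk : k \notin A.
    apply/negP => Ak; have := Aclos _ _ Ak _ Cj.
    by rewrite esym ejk (negbTE nAj) => /(_ isT).
  by move: nik; rewrite /d' /cut Ai Ck nAk !orbT.
have feas : feasible_sparse e d'.
  split; first exact: d'sym.
  split.
    by move=> i; rewrite /d' drefl /cut; case: (i \in A); rewrite ?andbF.
  move=> i j k ij nij; rewrite /dval tri_bool.
  apply/implyP; rewrite {1}/d' => /orP [dij|/orP [cij|cji]].
    have := dtri i j k ij nij; rewrite /dval tri_bool dij /= => /orP [h|h].
      by rewrite /d' h.
    by rewrite /d' h orbT.
  exact: key cij nij.
  have nji : Nij e j i k by move: nij => /and3P [a b c]; apply/and3P; split => //; rewrite orbC.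
  by have := key _ _ _ cji nji; rewrite orbC d'sym (d'sym j k).
have := dopt _ feas.
have t2 : (2 <= twom e)%N by move: m1; rewrite /num_edges; lia.
have tpos : (0 < (twom e)%:R :> rat)%R by rewrite ltr0n; lia.
have degpos i : (0 < deg e i)%N.
  by have [j eij] := noiso i; rewrite /deg card_gt0; apply/set0Pn; exists j; rewrite inE.
have term i j : (modB e i j * dval d' i j <= modB e i j * dval d i j)%R.
  have hd : d' i j = d i j || (cut i j || cut j i) by [].
  rewrite /dval hd; case dij: (d i j) => //=.
  case c: (cut i j || cut j i); last by [].
  have eij : e i j = false.
    case/orP: c => [/cut_ne /negbTE //|/cut_ne]; by rewrite esym => /negbTE.
  rewrite mulr0 mulr1 /modB eij /= sub0r oppr_le0.
  by apply: divr_ge0; rewrite ler0n.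
have strict : (modB e u v * dval d' u v < modB e u v * dval d u v)%R.
  have duv : d u v = false by move: Guv => /= /andP [_ /negbTE].
  have cuv : cut u v by apply/and3P.
  have euv : e u v = false by apply/negbTE/cut_ne.
  rewrite /dval /d' duv cuv /= mulr0 mulr1 /modB euv /= sub0r oppr_lt0.
  by apply: divr_gt0 => //; rewrite ltr0n muln_gt0 !degpos.
have S : (\sum_i \sum_j modB e i j * dval d' i j < \sum_i \sum_j modB e i j * dval d i j)%R.
  rewrite (bigD1 u) //= [X in (_ < X)%R](bigD1 u) //=.
  apply: ltr_leD; last by apply: ler_sum => i _; apply: ler_sum => j _.
  rewrite (bigD1 v) //= [X in (_ < X)%R](bigD1 v) //=.
  by apply: ltr_leD => //; apply: ler_sum => j _.
rewrite /obj_sparse !mulNr lerN2 ler_pM2l.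
  by move/(lt_le_trans S); rewrite ltxx.
by rewrite div1r invr_gt0.
Qed.
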